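(* The class of $(\circ,\wedge,\mathsf{A})$-algebras that are completely representable by partial functions is closed under (arbitrary) direct products.
   Context: A $(\circ,\wedge,\mathsf{A})$-algebra is a set with two binary operations $\circ,\wedge$ and one unary operation $\mathsf{A}$. An algebra of partial functions of this signature is a set of partial functions, with base $X$ the union of all their domains and ranges, closed under: composition $f\circ g=\{(x,z)\mid \exists y\,(x,y)\in f,(y,z)\in g\}$; intersection; antidomain $\mathsf{A}(f)=\{(x,x)\mid x\in X, x\notin\mathrm{dom}(f)\}$. A representation by partial functions is an isomorphism onto such an algebra. The order is $a\le b\iff a\wedge b=a$. A representation $\theta$ is complete if for every nonempty $S$ with $\bigwedge S$ existing, $\theta(\bigwedge S)=\bigcap\theta[S]$ (equivalently, for every $S$ with $\bigvee S$ existing, $\theta(\bigvee S)=\bigcup\theta[S]$). An algebra is completely representable if it has a complete representation. *)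

(* Defs.v *)
Record Alg : Type := MkAlg {
  car : Type;
  comp : car -> car -> car;
  meet : car -> car -> car;
  ad : car -> car
}.

Definition le (A : Alg) (a b : car A) : Prop := meet A a b = a.

Definition is_glb (A : Alg) (S : car A -> Prop) (m : car A) : Prop :=
  (forall s, S s -> le A m s) /\
  (forall l, (forall s, S s -> le A l s) -> le A l m).

(* Binary relations on X; partial functions are the functional ones. *)
Definition rel (X : Type) := X -> X -> Prop.
Definition functional {X : Type} (f : rel X) : Prop :=
  forall x y z, f x y -> f x z -> y = z.
Definition rel_eq {X : Type} (f g : rel X) : Prop :=
  forall x y, f x y <-> g x y.

Definition rcomp {X : Type} (f g : rel X) : rel X :=
  fun x z => exists y, f x y /\ g y z.
Definition rmeet {X : Type} (f g : rel X) : rel X :=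
  fun x y => f x y /\ g x y.
(* antidomain relative to base X *)
Definition rad {X : Type} (f : rel X) : rel X :=
  fun x y => x = y /\ ~ (exists z, f x z).

(* theta : A -> partial functions on X is a representation by partial
   functions: injective homomorphism onto a set of partial functions whose
   base (union of domains and ranges) is X. *)
Definition is_rep (A : Alg) (X : Type) (theta : car A -> rel X) : Prop :=
  (forall a, functional (theta a)) /\
  (forall a b, theta a = theta b -> a = b) /\
  (forall x, exists a y, theta a x y \/ theta a y x) /\
  (forall a b, rel_eq (theta (comp A a b)) (rcomp (theta a) (theta b))) /\
  (forall a b, rel_eq (theta (meet A a b)) (rmeet (theta a) (theta b))) /\
  (forall a, rel_eq (theta (ad A a)) (rad (theta a))).

Definition is_complete (A : Alg) (X : Type) (theta : car A -> rel X) : Prop :=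
  forall (S : car A -> Prop), (exists s, S s) ->
  forall m, is_glb A S m ->
  rel_eq (theta m) (fun x y => forall s, S s -> theta s x y).

Definition completely_representable (A : Alg) : Prop :=
  exists (X : Type) (theta : car A -> rel X),
    is_rep A X theta /\ is_complete A X theta.

Definition prod_alg (I : Type) (F : I -> Alg) : Alg :=
  {| car := forall i, car (F i);
     comp := fun a b i => comp (F i) (a i) (b i);
     meet := fun a b i => meet (F i) (a i) (b i);
     ad := fun a i => ad (F i) (a i) |}.

(* Main.v *)
Require Import Defs.
From Stdlib Require Import Classical ClassicalEpsilon ClassicalDescription FunctionalExtensionality PropExtensionality ProofIrrelevance Eqdep.

Lemma choose_reps (I : Type) (F : I -> Alg) (H : forall i, completely_representable (F i)) :
  {Xs : I -> Type & {th : forall i, car (F i) -> rel (Xs i) |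
     forall i, is_rep (F i) (Xs i) (th i) /\ is_complete (F i) (Xs i) (th i)}}.
Proof.
  pose (g := fun i => constructive_indefinite_description _ (H i)).
  exists (fun i => proj1_sig (g i)).
  exists (fun i => proj1_sig (constructive_indefinite_description _ (proj2_sig (g i)))).
  intro i. exact (proj2_sig (constructive_indefinite_description _ (proj2_sig (g i)))).
Qed.

Definition upd (I : Type) (F : I -> Alg) (a0 : forall j, car (F j)) (i : I) (v : car (F i))
  : forall j, car (F j) :=
  fun j => match excluded_middle_informative (i = j) with
           | left e => eq_rect i (fun k => car (F k)) v j e
           | right _ => a0 j end.

Lemma upd_same I F a0 i v : @upd I F a0 i v i = v.
Proof.
  unfold upd. destruct (excluded_middle_informative (i = i)) as [e|n].
  - rewrite <- eq_rect_eq. reflexivity.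
  - exfalso; apply n; reflexivity.
Qed.

Ltac sinv H := match type of H with
  | existT _ ?i ?x = existT _ ?j ?y =>
    let E := fresh in
    assert (E : i = j) by exact (f_equal (@projT1 _ _) H); try subst j;
    apply inj_pair2 in H; first [subst y | subst x | idtac] end.

Theorem mainTheorem7 (I : Type) (F : I -> Alg) :
  (forall i, completely_representable (F i)) ->
  completely_representable (prod_alg I F).
Proof.
  intro H. destruct (choose_reps I F H) as [Xs [th Hth]].
  set (X := {p : sigT Xs | inhabited (forall i, car (F i))}).
  set (theta := fun (a : car (prod_alg I F)) (p q : X) =>
         exists i x y, proj1_sig p = existT Xs i x /\ proj1_sig q = existT Xs i y
                       /\ th i (a i) x y).
  exists X, theta. split; [split; [|split; [|split; [|split; [|split]]]]|].
  - intros a [p hp] [q hq] [r hr] [i [x [y [E1 [E2 Hxy]]]]] [i' [x' [z [E1' [E2' Hxz]]]]].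
    simpl in *. subst. sinv E1'.
    destruct (Hth i) as [[Hf _] _]. pose proof (Hf _ _ _ _ Hxy Hxz). subst.
    f_equal. apply proof_irrelevance.
  - intros a b E. extensionality i.
    destruct (Hth i) as [[_ [Hinj _]] _]. apply Hinj.
    extensionality x. extensionality y. apply propositional_extensionality.
    split; intro Hr.
    + assert (T : theta a (exist _ (existT Xs i x) (inhabits a)) (exist _ (existT Xs i y) (inhabits a)))
        by (exists i, x, y; auto).
      rewrite E in T. destruct T as [i' [x' [y' [E1 [E2 T]]]]]. simpl in *. sinv E1. sinv E2. exact T.
    + assert (T : theta b (exist _ (existT Xs i x) (inhabits a)) (exist _ (existT Xs i y) (inhabits a)))
        by (exists i, x, y; auto).
      rewrite <- E in T. destruct T as [i' [x' [y' [E1 [E2 T]]]]]. simpl in *. sinv E1. sinv E2. exact T.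
  - intros [[i x] [a0]].
    destruct (Hth i) as [[_ [_ [Hb _]]] _].
    destruct (Hb x) as [ai [y Hy]].
    exists (upd I F a0 i ai), (exist _ (existT Xs i y) (inhabits a0)).
    destruct Hy as [Hy|Hy]; [left|right]; exists i; simpl.
    + exists x, y. rewrite upd_same. auto.
    + exists y, x. rewrite upd_same. auto.
  - intros a b [[i x] hp] q. unfold theta, rcomp; simpl.
    destruct (Hth i) as [[_ [_ [_ [Hc _]]]] _].
    split.
    + intros [i' [x' [y' [E1 [E2 T]]]]]. sinv E1.
      apply Hc in T. destruct T as [z [T1 T2]].
      exists (exist _ (existT Xs i z) hp). split.
      * exists i, x, z; auto.
      * exists i, z, y'; auto.
    + intros [r [[i1 [x1 [z1 [E1 [E2 T1]]]]] [i2 [z2 [y2 [E3 [E4 T2]]]]]]].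
      simpl in *. sinv E1. rewrite E2 in E3. sinv E3.
      exists i, x, y2. split; [reflexivity|split; [assumption|]].
      apply Hc. exists z1; auto.
  - intros a b [[i x] hp] q. unfold theta, rmeet; simpl.
    destruct (Hth i) as [[_ [_ [_ [_ [Hm _]]]]] _].
    split.
    + intros [i' [x' [y' [E1 [E2 T]]]]]. sinv E1.
      apply Hm in T. destruct T as [T1 T2]. split; exists i, x, y'; auto.
    + intros [[i1 [x1 [y1 [E1 [E2 T1]]]]] [i2 [x2 [y2 [E3 [E4 T2]]]]]].
      simpl in *. sinv E1. sinv E3. rewrite E2 in E4. sinv E4.
      exists i, x, y1. split; [reflexivity|split; [assumption|]].
      apply Hm. split; auto.
  - intros a [[i x] hp] q. unfold theta, rad; simpl.
    destruct (Hth i) as [[_ [_ [_ [_ [_ Ha]]]]] _].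
    split.
    + intros [i' [x' [y' [E1 [E2 T]]]]]. sinv E1.
      apply Ha in T. destruct T as [Exy Hn]. subst y'. split.
      * destruct q as [q hq]. simpl in E2. subst q. f_equal. apply proof_irrelevance.
      * intros [r [i1 [x1 [z1 [E1 [E3 T]]]]]]. simpl in E1. sinv E1.
        apply Hn. exists z1. exact T.
    + intros [Epq Hn]. subst q.
      exists i, x, x. split; [reflexivity|split; [reflexivity|]].
      apply Ha. split; [reflexivity|].
      intros [z Hz]. apply Hn. exists (exist _ (existT Xs i z) hp).
      exists i, x, z; auto.
  - intros S [s0 Hs0] m [Hlb Hglb] [[i x] hp] q. unfold theta; simpl.
    destruct (Hth i) as [[_ [_ [_ [_ [Hm _]]]]] Hcomp].
    split.
    + intros [i' [x' [y' [E1 [E2 T]]]]] s Hs. sinv E1.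
      exists i, x, y'. split; [reflexivity|split; [assumption|]].
      pose proof (Hlb s Hs) as L. unfold le in L. simpl in L.
      pose proof (f_equal (fun f => f i) L) as Li. simpl in Li.
      rewrite <- Li in T. apply Hm in T. apply T.
    + intro Hall.
      destruct (Hall s0 Hs0) as [i1 [x1 [y1 [E1 [E2 _]]]]]. sinv E1.
      exists i, x, y1. split; [reflexivity|split; [assumption|]].
      apply (Hcomp (fun t => exists s, S s /\ s i = t)).
      * exists (s0 i). exists s0. auto.
      * split.
        -- intros t [s [Hs Et]]. subst t. pose proof (Hlb s Hs) as L. unfold le in *.
           exact (f_equal (fun f => f i) L).
        -- intros l Hl. unfold le.
           assert (L : le (prod_alg I F) (upd I F m i l) m).
           { apply Hglb. intros s Hs. unfold le. simpl. extensionality k.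
             unfold upd. destruct (excluded_middle_informative (i = k)) as [e|n].
             - destruct e. simpl. apply Hl. exists s; auto.
             - pose proof (Hlb s Hs) as L. exact (f_equal (fun f => f k) L). }
           unfold le in L. simpl in L. pose proof (f_equal (fun f => f i) L) as Li.
           simpl in Li. rewrite upd_same in Li. exact Li.
      * intros t [s [Hs Et]]. subst t.
        destruct (Hall s Hs) as [i2 [x2 [y2 [E3 [E4 T]]]]]. sinv E3. rewrite E2 in E4. sinv E4. exact T.
Qed.
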